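(* Let $\mathcal{D}\subseteq\mathbb{R}^m$ be a polyhedron and $c,d\in\mathbb{R}^m$, and consider the problem $\inf\ c^\top x/d^\top x$ subject to $d^\top x>0$, $x\in\mathcal{D}$. If $\mathcal{D}\cap\{x: d^\top x>0\}\ne\emptyset$, then the optimal value of this problem is $-\infty$ if and only if at least one of the following holds: (1) there exists $x\in\mathcal{D}$ with $c^\top x<0$ and $d^\top x=0$; (2) there exists $r\in\mathbb{R}^m$ with $c^\top r<0$, $d^\top r=0$, and $x+\lambda r\in\mathcal{D}$ for all $x\in\mathcal{D}$ and all $\lambda\ge0$. *)

(* Defs.v *)
From HB Require Import structures.
From mathcomp Require Import all_boot all_order all_algebra.
From mathcomp Require Import reals.
Set Implicit Arguments. Unset Strict Implicit. Unset Printing Implicit Defensive.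
Import Order.TTheory GRing.Theory Num.Theory.
Local Open Scope ring_scope.

Definition dotp (R : realType) (m : nat) (u v : 'cV[R]_m) : R :=
  \sum_(i < m) u i 0 * v i 0.

Definition polyhedron (R : realType) (m : nat) (D : 'cV[R]_m -> Prop) : Prop :=
  exists (k : nat) (A : 'M[R]_(k, m)) (b : 'cV[R]_k),
    forall x : 'cV[R]_m, D x <-> (forall i : 'I_k, (A *m x) i 0 <= b i 0).

Definition frac_opt_val_neg_infty (R : realType) (m : nat)
    (D : 'cV[R]_m -> Prop) (c d : 'cV[R]_m) : Prop :=
  forall M : R, exists x : 'cV[R]_m,
    D x /\ 0 < dotp d x /\ dotp c x / dotp d x < M.

(* Main.v *)
From HB Require Import structures.
From mathcomp Require Import all_boot all_order all_algebra.
From mathcomp Require Import reals ring lra.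
Require Import Defs.
Import Order.TTheory GRing.Theory Num.Theory.
Local Open Scope ring_scope.

Fixpoint allT {A : Type} (P : A -> Prop) (s : seq A) : Prop :=
  match s with [::] => True | a :: s' => P a /\ allT P s' end.

Lemma allT_impl {A : Type} (P Q : A -> Prop) s :
  (forall a, P a -> Q a) -> allT P s -> allT Q s.
Proof. by move=> H; elim: s => //= a s IH [/H ? /IH ?]. Qed.

Lemma allT_and {A : Type} {P Q : A -> Prop} {s} :
  allT P s -> allT Q s -> allT (fun a => P a /\ Q a) s.
Proof. by elim: s => //= a s IH [? ?] [? ?]; split=> //; apply: IH. Qed.

Section Key.
Variables (R : realFieldType) (V : lmodType R).
Definition lin (f : V -> R) := forall x z (t : R), f (x + t *: z) = f x + t * f z.

Lemma linB {f} : lin f -> forall x y, f x = f y + f (x - y).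
Proof. by move=> hf x y; rewrite -[f (x - y)]mul1r -hf scale1r addrC subrK. Qed.

Definition feas (S E : seq ((V -> R) * R)) x :=
  allT (fun p => p.1 x <= p.2) S /\ allT (fun p => p.1 x = p.2) E.

Lemma key (c : V -> R) (hc : lin c) (S : seq ((V -> R) * R)) :
  forall E : seq ((V -> R) * R),
  allT (fun p => lin p.1) S -> allT (fun p => lin p.1) E ->
  (forall M, exists x, feas S E x /\ c x < M) ->
  exists z, allT (fun p => p.1 z <= 0) S /\ allT (fun p => p.1 z = 0) E /\ c z < 0.
Proof.
elim: S => [|a S IH] E.
  move=> _ linE unb.
  have [x0 [[_ fx0] _]] := unb 0.
  have [x [[_ fx] cx]] := unb (c x0).
  exists (x - x0); split=> //; split.
    have := allT_and (allT_and linE fx) fx0.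
    apply: allT_impl => p [[lp e1] e2].
    by move: e1; rewrite (linB lp x x0) e2 => /eqP; rewrite -subr_eq0 addrC addKr => /eqP.
  by move: cx; rewrite (linB hc x x0) -{2}[c x0]addr0 ltrD2l.
move=> /= [la linS] linE unb.
have [z [zS [zE cz]]] : exists z, allT (fun p => p.1 z <= 0) S /\
     allT (fun p => p.1 z = 0) E /\ c z < 0.
  apply: IH => // M; have [x [[[_ ?] ?] ?]] := unb M; by exists x.
have [az|az] := leP (a.1 z) 0; first by exists z.
have [w [wS [[aw wE] cw]]] : exists w, allT (fun p => p.1 w <= 0) S /\
     allT (fun p => p.1 w = 0) (a :: E) /\ c w < 0.
  apply: IH => //= M.
  have [x [[[ax xS] xE] cx]] := unb M.
  set t := (a.2 - a.1 x) / a.1 z.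
  have t0 : 0 <= t by rewrite /t divr_ge0 // ?subr_ge0 // ltW.
  exists (x + t *: z); split; last first.
    rewrite hc; apply: le_lt_trans cx; rewrite gerDl.
    by rewrite mulr_ge0_le0 // ltW.
  split.
    have := allT_and (allT_and linS xS) zS.
    apply: allT_impl => p [[lp e1] e2]; rewrite lp.
    by rewrite -[p.2]addr0 lerD // mulr_ge0_le0.
  split.
    rewrite la /t mulrVK ?unitfE ?gt_eqF //. by rewrite addrC subrK.
  have := allT_and (allT_and linE xE) zE.
  by apply: allT_impl => p [[lp e1] e2]; rewrite lp e1 e2 mulr0 addr0.
exists w; split; [split=> //; rewrite aw | ]; by [].
Qed.
End Key.
Arguments lin {R V}.
Arguments feas {R V}.

Lemma allT_map {A B : Type} (P : B -> Prop) (f : A -> B) s :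
  allT P (map f s) <-> allT (fun a => P (f a)) s.
Proof. by elim: s => //= a s ->. Qed.

Lemma allT_mem {A : eqType} (P : A -> Prop) s :
  allT P s <-> (forall a, a \in s -> P a).
Proof.
elim: s => //= a s ->; split.
  by move=> [Pa H] x; rewrite inE => /orP [/eqP -> | /H].
by move=> H; split; [apply: H; rewrite inE eqxx | move=> x xs; apply: H; rewrite inE xs orbT].
Qed.

Section Main.
Variables (R : realType) (m : nat).

Lemma dotpD (u x y : 'cV[R]_m) : dotp u (x + y) = dotp u x + dotp u y.
Proof. by rewrite /dotp -big_split; apply: eq_bigr => i _; rewrite mxE mulrDr. Qed.
Lemma dotpZ (u x : 'cV[R]_m) a : dotp u (a *: x) = a * dotp u x.
Proof. by rewrite /dotp mulr_sumr; apply: eq_bigr => i _; rewrite mxE mulrCA. Qed.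
Lemma AD k n (A : 'M[R]_(k, m)) (x y : 'M[R]_(m, n)) i j : (A *m (x + y)) i j = (A *m x) i j + (A *m y) i j.
Proof. by rewrite mulmxDr mxE. Qed.
Lemma AZ k n (A : 'M[R]_(k, m)) a (x : 'M[R]_(m, n)) i j : (A *m (a *: x)) i j = a * (A *m x) i j.
Proof. by rewrite -scalemxAr mxE. Qed.
End Main.

Theorem theorem3p7 (R : realType) (m : nat) (D : 'cV[R]_m -> Prop)
    (c d : 'cV[R]_m) :
  polyhedron D ->
  (exists x : 'cV[R]_m, D x /\ 0 < dotp d x) ->
  (frac_opt_val_neg_infty D c d <->
   ((exists x : 'cV[R]_m, D x /\ dotp c x < 0 /\ dotp d x = 0) \/
    (exists r : 'cV[R]_m, dotp c r < 0 /\ dotp d r = 0 /\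
       forall (x : 'cV[R]_m) (lam : R), D x -> 0 <= lam -> D (x + lam *: r)))).
Proof.
move=> [k [A [b hD]]] [x1 [Dx1 dx1]]; split.
  move=> unb.
  pose V := ('cV[R]_m * R^o)%type.
  pose S : seq ((V -> R) * R) := (fun p : V => - p.2, 0) ::
     map (fun i => (fun p : V => (A *m p.1) i 0 - b i 0 * p.2, 0)) (enum 'I_k).
  pose E : seq ((V -> R) * R) := [:: (fun p : V => dotp d p.1, 1)].
  have linc : forall u : 'cV[R]_m, lin (fun p : V => dotp u p.1).
    by move=> u x z t /=; rewrite dotpD dotpZ.
  have [[y s] [/= [hs hS] [[hd _] hc]]] :
    exists z, allT (fun p => p.1 z <= 0) S /\ allT (fun p => p.1 z = 0) E /\ dotp c z.1 < 0.
    apply: (@key R V _ (linc c)).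
    - split; first by move=> x z t /=; rewrite opprD mulrN.
      apply/allT_map/allT_mem => i _ x z t /=.
      rewrite AD AZ; change (t *: z.2) with (t * z.2); ring.
    - by split=> //; apply: linc.
    move=> M; have [x [Dx [dx cx]]] := unb M.
    exists ((dotp d x)^-1 *: x, (dotp d x)^-1 : R^o); split; last first.
      by rewrite /= dotpZ mulrC.
    split.
      split; first by rewrite /= oppr_le0 invr_ge0 ltW.
      apply/allT_map/allT_mem => i _ /=.
      rewrite AZ [b i 0 / _]mulrC -mulrBr mulr_ge0_le0 //; first by rewrite invr_ge0 ltW.
      rewrite subr_le0.
      by move: i; apply/hD.
    by split=> //=; rewrite dotpZ mulVf // gt_eqF.
  move/allT_map/allT_mem: hS => hS.
  have hS' : forall i, (A *m y) i 0 <= b i 0 * s.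
    by move=> i; have := hS i (mem_enum _ i); rewrite /= subr_le0.
  have s0 : 0 <= s by move: hs; rewrite /= oppr_le0.
  case: (eqVneq s 0) => [s0'|sn0].
    right; exists y; split=> //; split=> // x lam Dx lam0.
    apply/hD => i; rewrite AD AZ.
    have h2 := (hD x).1 Dx i; have := hS' i; rewrite s0' mulr0 => h1.
    by rewrite -[b i 0]addr0 lerD // mulr_ge0_le0.
  have sp : 0 < s by rewrite lt_def sn0 s0.
  left; exists (s^-1 *: y); split.
    by apply/hD => i; rewrite AZ mulrC ler_pdivrMr //; exact: hS'.
  by rewrite !dotpZ hd mulr0; split=> //; rewrite pmulr_rlt0 ?invr_gt0.
move=> H M.
have [w [cw [dw Hw]]] : exists w, dotp c w < 0 /\ dotp d w = 0 /\ forall s, 0 <= s -> exists x, D x /\ 0 < dotp d x /\ dotp c x / dotp d x = (dotp c x1 + s * dotp c w) / dotp d x1.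
  case: H => [[x0 [Dx0 [cx0 dx0]]] | [r [cr [dr Hr]]]].
    exists x0; split; [|split] => // s s0.
    have s1 : 0 < 1 + s by lra.
    exists ((1 + s)^-1 *: (x1 + s *: x0)); split.
      apply/hD => i; rewrite AZ AD AZ.
      have h1 := (hD _).1 Dx1 i; have h0 := (hD _).1 Dx0 i.
      by rewrite mulrC ler_pdivrMr // mulrDr mulr1 lerD // [_ * s]mulrC ler_wpM2l.
    rewrite !dotpZ !dotpD !dotpZ dx0 mulr0 addr0.
    split; first by rewrite mulr_gt0 ?invr_gt0.
    by field; rewrite ?gt_eqF ?lt0r_neq0.
  exists r; split; [|split] => // s s0.
  exists (x1 + s *: r); split; first exact: Hr.
  by rewrite !dotpD !dotpZ dr mulr0 addr0.
pose K := dotp c x1 - M * dotp d x1.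
pose s := `|K| / (- dotp c w) + 1.
have s0 : 0 <= s by rewrite /s addr_ge0 // divr_ge0 // oppr_ge0 ltW.
have [x [Dx [dx ex]]] := Hw s s0.
exists x; split=> //; split=> //; rewrite ex ltr_pdivrMr //.
have -> : s * dotp c w = - `|K| + dotp c w.
  by rewrite /s; field; rewrite lt_eqF.
have hK := ler_norm K.
apply: (@lt_le_trans _ _ (dotp c x1 - `|K|)); first by rewrite addrA gtrDl.
by rewrite lerBlDr -lerBlDl.

Qed.
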